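(* Let $T$ be a transaction that has not written key $k$ (i.e. no version of $k$ is in $T.writeset$), let $R$ be an Atomic Readset of committed key versions read by $T$, and suppose $R$ contains a version $k_m$ of $k$. If the AtomicRead procedure on input $k$ and $R$ returns a version $k_j$, then $j = m$, i.e. $k_j = k_m$.
   Context: Transactions $T_i$ are identified by IDs $i$ drawn from a totally ordered set of positive values; $0$ is a lower bound below all IDs. $k_i$ denotes the version of key $k$ written by transaction $T_i$ (a transaction writes at most one committed version of each key). $T_i.writeset$ is the set of key versions written by $T_i$, and $k_i.cowritten := T_i.writeset$ (so $k_i \in k_i.cowritten$). Atomic Readset: a set $R$ of key versions is an Atomic Readset if for every $k_i \in R$ and every $l_i \in k_i.cowritten$, if $R$ contains a version $l_j$ of key $l$ then $j \geq i$. AtomicRead procedure: input a key $k$ and a set $R$ of key versions; $\mathrm{KVI}[k]$ is a finite set of IDs of committed transactions that wrote key $k$. (1) Set $lower := \max(\{0\} \cup \{ i : l_i \in R \text{ for some key } l,\ k \in l_i.cowritten\})$. (2) If $\mathrm{KVI}[k]$ is empty and $lower = 0$, return NULL. (3) Consider candidate IDs $t \in \mathrm{KVI}[k]$ with $t \geq lower$ in decreasing order; $t$ is valid if there is no $l_t \in k_t.cowritten$ such that $R$ contains a version $l_j$ with $j < t$. Let $target$ be the largest valid candidate. (4) If none is valid return NULL; otherwise return $k_{target}$ and the new read set $R \cup \{k_{target}\}$. *)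

(* Defs.v *)
From mathcomp Require Import all_boot.
Set Implicit Arguments. Unset Strict Implicit. Unset Printing Implicit Defensive.

(* Transaction IDs are positive naturals; 0 is the lower bound below all IDs.  W i : seq K is the writeset (keys written)
   of committed transaction T_i.  A key version k_i is the pair (k, i). *)

Section Model.
Variable K : eqType.
Variable W : nat -> seq K.

Definition version := (K * nat)%type.

Definition cowritten (v : version) : seq version := [seq (l, v.2) | l <- W v.2].

Definition atomic_readset (R : seq version) : Prop :=
  forall v, v \in R -> forall w, w \in cowritten v ->
  forall u, u \in R -> u.1 = w.1 -> w.2 <= u.2.

Definition lower (k : K) (R : seq version) : nat :=
  \max_(v <- R | (k, v.2) \in cowritten v) v.2.

Definition valid (k : K) (R : seq version) (t : nat) : bool :=
  ~~ has (fun w : version => has (fun u : version => (u.1 == w.1) && (u.2 < t)) R)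
         (cowritten (k, t)).

(* AtomicRead(k, R), with KVI : K -> seq nat the key-version index.
   Returns None for NULL, or Some (k_target, R ∪ {k_target}). *)
Definition atomic_read (KVI : K -> seq nat) (k : K) (R : seq version)
  : option (version * seq version) :=
  let lo := lower k R in
  if (KVI k == [::]) && (lo == 0) then None else
  let cands := [seq t <- KVI k | (lo <= t) && valid k R t] in
  if cands is [::] then None else
  let target := \max_(t <- cands) t in
  Some ((k, target), (k, target) :: R).

End Model.

(* Main.v *)
Require Import Defs.
From mathcomp Require Import all_boot.

Theorem corollary1 (K : eqType) (W : nat -> seq K) (KVI : K -> seq nat)
  (TW : seq K) (k : K) (R : seq (K * nat)) (m j : nat) (R' : seq (K * nat)) :
  (* KVI[k'] consists of IDs of committed transactions that wrote k' *)
  (forall k' t, t \in KVI k' -> 0 < t /\ k' \in W t) ->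
  (* T has not written k *)
  k \notin TW ->
  (* R consists of committed key versions *)
  (forall v, v \in R -> 0 < v.2 /\ v.1 \in W v.2) ->
  atomic_readset W R ->
  (k, m) \in R ->
  atomic_read W KVI k R = Some ((k, j), R') ->
  j = m.
Proof.
move=> HK _ HR _ Hkm.
have [_ HkWm] := HR _ Hkm.
have Hlo : m <= lower W k R.
  rewrite /lower; apply: (@leq_bigmax_seq _ R (fun v : K * nat => (k, v.2) \in cowritten W v) (fun v : K * nat => v.2) (k, m) Hkm) => /=.
  by apply/mapP; exists k.
have Hc : forall t, t \in [seq t <- KVI k | (lower W k R <= t) && valid W k R t] -> t = m.
  move=> t; rewrite mem_filter => /andP[/andP[Hlt Hv] Ht].
  have [_ HkWt] := HK _ _ Ht.
  apply/eqP; rewrite eqn_leq (leq_trans Hlo Hlt) andbT.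
  rewrite leqNgt; apply/negP => Hmt.
  move/negP: Hv; apply; apply/hasP; exists (k, t).
    by apply/mapP; exists k.
  by apply/hasP; exists (k, m) => //=; rewrite eqxx Hmt.
rewrite /atomic_read.
case: ifP => // _.
case E: [seq t <- KVI k | (lower W k R <= t) && valid W k R t] => [|c cs] //.
case=> <- _.
rewrite E in Hc.
have Hcm : c = m by apply: Hc; rewrite inE eqxx.
apply/eqP; rewrite eqn_leq; apply/andP; split.
  rewrite big_seq; apply: (big_ind (fun x => x <= m)) => //.
    by move=> x y hx hy; rewrite geq_max hx hy.
  by move=> i Hi; rewrite (Hc i Hi).
by rewrite big_cons -Hcm leq_maxl.
Qed.
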